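(* Let $f$ be a probability density on $\mathcal{X}$ (with respect to a $\sigma$-finite measure $\lambda$), let $q(\cdot\mid x)$ be a proposal density, and let $(X_n)_{n\ge 0}$ be the Metropolis–Hastings Markov chain with target density $f$, proposal $q$, and initial density $p^0$; denote by $p^n$ the density of $X_n$. Assume there is $\delta\in(0,1)$ such that $q(y\mid x)\ge \delta f(y)$ for all $x,y\in\mathcal{X}$, and that $r:=\left\| \frac{p^0}{f}-1\right\|_\infty$ satisfies $0<r<\infty$. Put $\nu=1-\delta$. Then for every $\alpha\in(1,+\infty)$ and every $n\ge 0$: \[ D_{\alpha}(p^n,f)\le\frac{1}{\alpha(1-\alpha)}\bigl(1-(r\nu^n + 1)^\alpha\bigr),\qquad R_\alpha(p^n,f)\le \frac{\alpha}{\alpha -1}\,r\nu^n,\qquad T_\alpha(p^n,f)\le\frac{1}{\alpha-1}\bigl((r\nu^n +1)^\alpha -1\bigr). \] In particular all three divergences tend to $0$ as $n\to\infty$.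
   Context: For probability densities $p_1,p_2$ on $\mathcal{X}$ with respect to $\lambda$ and $\alpha>0$, $\alpha\ne 1$, write $M_\alpha(p_1,p_2)=\int_{\mathcal{X}} p_1^\alpha(x)\,p_2^{1-\alpha}(x)\,\lambda(\mathrm{d}x)$. The $\alpha$-divergence is $D_\alpha(p_1,p_2)=\frac{1}{\alpha(1-\alpha)}\bigl(1-M_\alpha(p_1,p_2)\bigr)$; the Rényi $\alpha$-divergence is $R_\alpha(p_1,p_2)=\frac{1}{\alpha-1}\log M_\alpha(p_1,p_2)$; the Tsallis $\alpha$-divergence is $T_\alpha(p_1,p_2)=\frac{1}{\alpha-1}\bigl(M_\alpha(p_1,p_2)-1\bigr)$. The Metropolis–Hastings chain: given $X_{n}=x$, draw $Y\sim q(\cdot\mid x)$ and set $X_{n+1}=Y$ with probability $\min\bigl(1,\frac{f(Y)q(x\mid Y)}{f(x)q(Y\mid x)}\bigr)$, otherwise $X_{n+1}=x$. The sup norm $\|\cdot\|_\infty$ is taken over $\mathcal{X}$. *)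

(* Defs.v *)
From HB Require Import structures.
From mathcomp Require Import all_boot all_order all_algebra.
From mathcomp Require Import all_classical all_reals all_analysis.
Set Implicit Arguments. Unset Strict Implicit. Unset Printing Implicit Defensive.
Import Order.TTheory GRing.Theory Num.Theory.
Local Open Scope classical_set_scope.
Local Open Scope ring_scope.

Section Div.
Context {d : measure_display} {X : measurableType d} {R : realType}.
Variable lam : {measure set X -> \bar R}.

Definition Malpha (a : R) (p1 p2 : X -> R) : \bar R :=
  (\int[lam]_x ((p1 x `^ a) * (p2 x `^ (1 - a)))%:E)%E.

Definition Dalpha (a : R) (p1 p2 : X -> R) : \bar R :=
  ((1 - Malpha a p1 p2) * (1 / (a * (1 - a)))%:E)%E.

Definition Ralpha (a : R) (p1 p2 : X -> R) : \bar R :=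
  (lne (Malpha a p1 p2) * (1 / (a - 1))%:E)%E.

Definition Talpha (a : R) (p1 p2 : X -> R) : \bar R :=
  ((Malpha a p1 p2 - 1) * (1 / (a - 1))%:E)%E.

Definition is_density (p : X -> R) : Prop :=
  measurable_fun setT p /\ (forall x, 0 <= p x) /\
  (\int[lam]_x (p x)%:E = 1)%E.

(* Metropolis-Hastings acceptance probability; q x y = q(y | x).
   Convention: acceptance 1 when f(x) q(y|x) = 0. *)
Definition mh_acc (f : X -> R) (q : X -> X -> R) (x y : X) : R :=
  if f x * q x y == 0 then 1
  else Num.min 1 ((f y * q y x) / (f x * q x y)).

(* density of X_n for the MH chain started from density p0:
   p^{n+1}(y) = int p^n(x) acc(x,y) q(y|x) dx
               + p^n(y) (1 - int acc(y,z) q(z|y) dz) *)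
Fixpoint mh_density (f : X -> R) (q : X -> X -> R) (p0 : X -> R) (n : nat)
  : X -> R :=
  match n with
  | 0%N => p0
  | n'.+1 => let pn := mh_density f q p0 n' in
     fun y => Rintegral lam setT (fun x => pn x * mh_acc f q x y * q x y)
            + pn y * (1 - Rintegral lam setT (fun z => mh_acc f q y z * q y z))
  end.

(* |p0/f - 1| pointwise, in extended reals (+oo where f = 0 < p0;
   0 where f = p0 = 0) *)
Definition ratio_dev (p0 f : X -> R) (x : X) : \bar R :=
  if f x != 0 then (`| p0 x / f x - 1 |)%:E
  else if p0 x == 0 then 0%E else +oo%E.

Definition sup_ratio_dev (p0 f : X -> R) : \bar R :=
  ereal_sup (range (ratio_dev p0 f)).

End Div.

(* Main.v *)
Require Import Defs.
From HB Require Import structures.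
From mathcomp Require Import all_boot all_order all_algebra.
From mathcomp Require Import all_classical all_reals all_analysis.
From mathcomp Require Import measurable_realfun.
From mathcomp Require Import ring lra.
Import Order.TTheory GRing.Theory Num.Theory.
Import numFieldNormedType.Exports.
Local Open Scope classical_set_scope.
Local Open Scope ring_scope.

Lemma closed0 (R : realType) : closed [set (0:R)].
Proof. apply: accessible_closed_set1; apply: hausdorff_accessible; exact: norm_hausdorff. Qed.

Lemma measurable_inv (R : realType) : measurable_fun [set: R] (@GRing.inv R).
Proof.
have -> : (@GRing.inv R) = (fun t => if t == 0 then 0 else t^-1).
  by apply/funext => t; case: eqP => // ->; rewrite invr0.
apply: measurable_fun_if => //.
- apply: (@measurable_fun_eqr _ R R setT id (cst 0)).
  exact: measurable_id. exact: measurable_cst.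
- have -> : [set: R] `&` (fun t : R => t == 0) @^-1` [set false] = ~` [set 0].
    apply/seteqP; split => t /=; first by move=> [_ /negbT/eqP].
    by move=> /eqP/negbTE.
  apply: open_continuous_measurable_fun; first exact/closed_openC/closed0.
  by move=> t; rewrite inE => /eqP t0; apply: inv_continuous.
Qed.

Lemma mul_min1 (R : realType) (u v : R) : 0 < u -> u * Num.min 1 (v / u) = Num.min u v.
Proof.
move=> u0; rewrite minr_pMr ?ltW// mulr1 mulrC divfK//; exact: lt0r_neq0.
Qed.

Lemma ln_upper (R : realType) (c a m : R) : 0 <= c -> 1 < a -> m <= (c + 1) `^ a ->
  ln m <= 2 * a * c.
Proof.
move=> c0 a1 mU.
have [m0|mpos] := leP m 0; first by rewrite ln0 // mulr_ge0 //; lra.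
apply: (le_trans (y := ln ((c + 1) `^ a))).
  rewrite ler_ln ?posrE ?powR_gt0 //; lra.
rewrite ln_powR.
have : ln (c + 1) <= c by rewrite addrC; apply: le_ln1Dx; lra.
nra.
Qed.

Lemma ln_lower (R : realType) (c a m : R) : 0 <= c <= 1/2 -> 1 < a -> (1 - c) `^ a <= m ->
  - (2 * a * c) <= ln m.
Proof.
move=> /andP[c0 c2] a1 mL.
have pc : 0 < 1 - c by lra.
have pw : 0 < (1 - c) `^ a by apply: powR_gt0.
apply: (le_trans (y := ln ((1 - c) `^ a))); last first.
  rewrite ler_ln ?posrE //; lra.
rewrite ln_powR.
have hinv : (1 - c)^-1 * (1 - c) = 1 by rewrite mulVf //; lra.
have hl : ln ((1 - c)^-1) <= (1 - c)^-1 - 1.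
  rewrite -{1}[(1 - c)^-1](subrK 1) addrC; apply: le_ln1Dx.
  have : 0 < (1 - c)^-1 by rewrite invr_gt0.
  lra.
have e : ln ((1 - c)^-1) = - ln (1 - c) by rewrite lnV // posrE.
have : (1 - c)^-1 - 1 <= 2 * c.
  have : 0 < (1 - c)^-1 by rewrite invr_gt0.
  nra.
nra.
Qed.

Lemma limits (R : realType) (c m : nat -> R) (a : R) : 1 < a ->
  (forall n, 0 <= c n) -> c n @[n --> \oo] --> 0 ->
  (forall n, m n <= (c n + 1) `^ a) -> (forall n, c n <= 1 -> (1 - c n) `^ a <= m n) ->
  [/\ ((1 - (m n)%:E) * (1 / (a * (1 - a)))%:E)%E @[n --> \oo] --> 0%E,
      (lne (m n)%:E * (1 / (a - 1))%:E)%E @[n --> \oo] --> 0%E &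
      (((m n)%:E - 1) * (1 / (a - 1))%:E)%E @[n --> \oo] --> 0%E].
Proof.
move=> a1 c0 cc mU mL.
have ev : \forall n \near \oo, c n < 1/2 by apply: cvgr_lt cc _ _; lra.
have mpos : \forall n \near \oo, 0 < m n.
  near=> n; have h : c n < 1/2 by near: n.
  apply: lt_le_trans (mL n _); last lra.
  by apply: powR_gt0; lra.
have lc : ln (m n) @[n --> \oo] --> 0.
  apply: (squeeze_cvgr (f := fun n => - (2 * a * c n)) (h := fun n => 2 * a * c n)).
  - near=> n; have h : c n < 1/2 by near: n.
    apply/andP; split.
      apply: ln_lower => //; last by apply: mL; lra.
      by rewrite c0 /=; lra.
    exact: ln_upper.
  - rewrite -oppr0 -(mulr0 (2 * a)); apply: cvgN; exact: cvgMl_tmp.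
  - rewrite -(mulr0 (2 * a)); exact: cvgMl_tmp.
have mc : m n @[n --> \oo] --> (1:R).
  have e : expR (ln (m n)) @[n --> \oo] --> (1:R).
    rewrite -expR0; apply: (cvg_comp _ _ lc); exact: continuous_expR.
  apply: cvg_trans e; apply: near_eq_cvg; near=> n.
  by rewrite lnK // posrE; near: n.
split.
- apply: cvg_EFin; first by near=> n.
  rewrite (_ : 0 = (1 - 1) * (1 / (a * (1 - a)))); last by rewrite subrr mul0r.
  apply: cvgMr_tmp; apply: cvgB => //; exact: cvg_cst.
- apply: cvg_EFin.
    near=> n; rewrite /lne (lt_geF _) //; near: n; exact: mpos.
  have -> : fine \o (fun n => (lne (m n)%:E * (1 / (a - 1))%:E)%E) =
            (fun n => ln (m n) * (1 / (a - 1))).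
    apply/funext => n; rewrite /comp; have [m0|mp] := leP (m n) 0.
      by rewrite le0_lneNy // gt0_mulNye ?lte_fin ?divr_gt0 //= ?ln0 ?mul0r //; lra.
    by rewrite /lne /= (lt_geF mp).
  rewrite (_ : 0 = 0 * (1 / (a - 1))); last by rewrite mul0r.
  exact: cvgMr_tmp.
- apply: cvg_EFin; first by near=> n.
  rewrite (_ : 0 = (1 - 1) * (1 / (a - 1))); last by rewrite subrr mul0r.
  apply: cvgMr_tmp; apply: cvgB => //; exact: cvg_cst.
Unshelve. all: by end_near.
Qed.


Lemma div_bounds (R : realType) (m c a : R) : 0 <= c -> 1 < a -> 0 <= m <= (c + 1) `^ a ->
  [/\ ((1 - m%:E) * (1 / (a * (1 - a)))%:E <= (1 / (a * (1 - a)) * (1 - (c + 1) `^ a))%:E)%E,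
      (lne m%:E * (1 / (a - 1))%:E <= (a / (a - 1) * c)%:E)%E &
      ((m%:E - 1) * (1 / (a - 1))%:E <= (1 / (a - 1) * ((c + 1) `^ a - 1))%:E)%E].
Proof.
move=> c0 a1 /andP[m0 mU].
have ka : 0 < 1 / (a - 1) by rewrite divr_gt0 //; lra.
split.
- rewrite -EFinB -EFinM lee_fin.
  have k0 : 1 / (a * (1 - a)) < 0.
    by rewrite div1r invr_lt0; nra.
  nra.
- have [m0'|mpos] := leP m 0.
    by rewrite le0_lneNy // gt0_mulNye ?lte_fin // leNye.
  rewrite /lne /= (lt_geF mpos) -EFinM lee_fin.
  have hl : ln m <= a * c.
    apply: (le_trans (y := ln ((c + 1) `^ a))).
      rewrite ler_ln ?posrE ?powR_gt0 //; lra.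
    rewrite ln_powR ler_wpM2l //; first lra.
    by rewrite addrC; apply: le_ln1Dx; lra.
  rewrite (_ : a / (a - 1) * c = (a * c) * (1 / (a - 1))); last by field; lra.
  by rewrite ler_wpM2r // ltW.
- rewrite -EFinB -EFinM lee_fin; nra.
Qed.



Section SF.
Context d (X : measurableType d) (R : realType) (lam : {measure set X -> \bar R})
  (hs : sigma_finite setT lam).
Definition lamS : set X -> \bar R := lam.
HB.instance Definition _ := Measure.on lamS.
HB.instance Definition _ := Measure_isSigmaFinite.Build _ _ _ lamS hs.
Lemma fubini_lam (F : X * X -> \bar R) : measurable_fun [set: (X * X)%type] F ->
  (forall z, 0 <= F z)%E ->
  (\int[lam]_x \int[lam]_y F (x, y) = \int[lam]_y \int[lam]_x F (x, y))%E.
Proof. move=> mF F0. exact: (@fubini_tonelli _ _ _ _ _ lamS lamS F mF F0). Qed.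
Lemma mF_lam (F : X * X -> \bar R) : measurable_fun [set: (X * X)%type] F ->
  (forall z, 0 <= F z)%E ->
  measurable_fun setT (fun x => \int[lam]_y F (x, y))%E.
Proof. move=> mF F0. exact: (@measurable_fun_fubini_tonelli_F _ _ _ _ _ lamS F mF F0). Qed.
Lemma mG_lam (F : X * X -> \bar R) : measurable_fun [set: (X * X)%type] F ->
  (forall z, 0 <= F z)%E ->
  measurable_fun setT (fun y => \int[lam]_x F (x, y))%E.
Proof. move=> mF F0. exact: (@measurable_fun_fubini_tonelli_G _ _ _ _ _ lamS F mF F0). Qed.
End SF.

Section MH.
Context d (X : measurableType d) (R : realType) (lam : {measure set X -> \bar R}).
Context (f : X -> R) (q : X -> X -> R) (delta : R).
Context (hf : is_density lam f) (hq : forall x, is_density lam (q x)).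
Context (mq : measurable_fun setT (fun xy : X * X => q xy.1 xy.2)).
Context (hs : sigma_finite setT lam).
Context (hd : 0 < delta < 1) (hqd : forall x y, delta * f y <= q x y).

Definition K x y := mh_acc f q x y * q x y.

Lemma f0 x : 0 <= f x. Proof. by case: hf => _ [+ _]. Qed.
Lemma q0 x y : 0 <= q x y. Proof. by case: (hq x) => _ [+ _]. Qed.

Lemma pos_of_prod x y : f x * q x y != 0 -> 0 < f x /\ 0 < q x y.
Proof.
rewrite mulf_eq0 negb_or => /andP[a b].
by split; rewrite lt0r ?a ?b ?f0 ?q0.
Qed.

Lemma acc01 x y : 0 <= mh_acc f q x y <= 1.
Proof.
rewrite /mh_acc; case: ifP => [_|/negbT H]; first by rewrite ler01 lexx.
have [a b] := pos_of_prod _ _ H.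
rewrite ge_min lexx le_min ler01 /= andbT.
by rewrite divr_ge0 ?mulr_ge0 ?f0 ?q0 // ltW // mulr_gt0.
Qed.

Lemma K0 x y : 0 <= K x y.
Proof. by rewrite /K mulr_ge0 ?q0 //; case/andP: (acc01 x y). Qed.

Lemma Kle x y : K x y <= q x y.
Proof. by rewrite /K ler_piMl ?q0 //; case/andP: (acc01 x y). Qed.

Lemma Kge x y : delta * f y <= K x y.
Proof.
rewrite /K /mh_acc; case: ifP => [_|/negbT H]; first by rewrite mul1r hqd.
have [a b] := pos_of_prod _ _ H.
have -> : Num.min 1 (f y * q y x / (f x * q x y)) * q x y
    = Num.min (q x y) (f y * q y x / f x).
  rewrite minr_pMl ?q0// mul1r; congr Num.min; field.
  by apply/andP; split; apply: lt0r_neq0.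
rewrite le_min hqd /= ler_pdivlMr //.
have := hqd y x; have := f0 y; have := f0 x; nra.
Qed.

Lemma K_rev x y : f x * K x y = f y * K y x.
Proof.
rewrite /K /mh_acc.
have [A|A] := eqVneq (f x * q x y) 0; have [B|B] := eqVneq (f y * q y x) 0.
- by rewrite !mul1r A B.
- by rewrite mul1r A mul0r (min_r ler01) mul0r mulr0.
- by rewrite mul1r B mul0r (min_r ler01) mul0r mulr0.
- rewrite mulrCA mulrC mul_min1; last first.
    by have [a b] := pos_of_prod _ _ A; exact: mulr_gt0.
  rewrite [in RHS]mulrCA [in RHS]mulrC mul_min1; first by rewrite minC.
  by have [a b] := pos_of_prod _ _ B; exact: mulr_gt0.
Qed.

Lemma mf : measurable_fun setT f. Proof. by case: hf. Qed.

Lemma mK : measurable_fun setT (fun z : X * X => K z.1 z.2).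
Proof.
have mf1 : measurable_fun setT (fun z : X * X => f z.1).
  exact: measurableT_comp mf measurable_fst.
have mf2 : measurable_fun setT (fun z : X * X => f z.2).
  exact: measurableT_comp mf measurable_snd.
have mq21 : measurable_fun setT (fun z : X * X => q z.2 z.1).
  have ms : measurable_fun setT (fun z : X * X => (z.2, z.1)).
    exact: measurable_fun_pair measurable_snd measurable_fst.
  exact: (measurableT_comp mq ms).
have mA : measurable_fun setT (fun z : X * X => f z.1 * q z.1 z.2).
  exact: measurable_funM.
have mB : measurable_fun setT (fun z : X * X => f z.2 * q z.2 z.1).
  exact: measurable_funM.
apply: measurable_funM => //.
rewrite /mh_acc.
apply: measurable_fun_ifT.
- by apply: (measurable_fun_eqr mA).
- exact: measurable_cst.
- apply: measurable_minr; first exact: measurable_cst.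
  apply: measurable_funM => //.
  exact: measurableT_comp (@measurable_inv R) mA.
Qed.

Lemma mKx x : measurable_fun setT (K x).
Proof. exact: (measurableT_comp mK (pair1_measurable x)). Qed.

Lemma mKy y : measurable_fun setT (fun x => K x y).
Proof. exact: (measurableT_comp mK (pair2_measurable y)). Qed.


Lemma intP (g : X -> R) : measurable_fun setT g ->
  (\int[lam]_x `|(g x)%:E| < +oo)%E -> lam.-integrable setT (EFin \o g).
Proof.
move=> mg fin; apply/integrableP; split => //; exact/measurable_EFinP.
Qed.

Lemma dens_int (g : X -> R) : is_density lam g -> lam.-integrable setT (EFin \o g).
Proof.
case=> mg [g0 ig]; apply: intP => //.
under eq_integral do rewrite gee0_abs ?lee_fin ?g0 //.
by rewrite ig ltry.
Qed.

Lemma dens_R (g : X -> R) : is_density lam g -> \int[lam]_x g x = 1.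
Proof. by case=> _ [_ ig]; rewrite /Rintegral ig. Qed.

Lemma int_dom (g h : X -> R) : measurable_fun setT g ->
  lam.-integrable setT (EFin \o h) -> (forall x, `|g x| <= h x) ->
  lam.-integrable setT (EFin \o g).
Proof.
move=> mg ih gh; apply: le_integrable ih => //; first exact/measurable_EFinP.
move=> x _; rewrite /comp !abse_EFin lee_fin (le_trans (gh x)) //; exact: ler_norm.
Qed.

Lemma intZ (g : X -> R) (k : R) : lam.-integrable setT (EFin \o g) ->
  lam.-integrable setT (EFin \o (fun x => k * g x)).
Proof.
move=> ig; apply: eq_integrable (integrableZl _ k ig) => // x _; by rewrite /comp EFinM.
Qed.

Lemma f_int : lam.-integrable setT (EFin \o f). Proof. exact: dens_int. Qed.
Lemma q_int x : lam.-integrable setT (EFin \o q x). Proof. exact: dens_int. Qed.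

Lemma Ky_int y : lam.-integrable setT (EFin \o K y).
Proof.
apply: int_dom (q_int y) _; first exact: mKx.
by move=> x; rewrite ger0_norm ?K0 ?Kle.
Qed.

Definition A y := \int[lam]_x K y x.

Lemma A_le1 y : A y <= 1.
Proof.
rewrite -(dens_R _ (hq y)); apply: le_Rintegral => //; [exact: Ky_int|exact: q_int|].
by move=> x _; exact: Kle.
Qed.

Lemma A_ge y : delta <= A y.
Proof.
have -> : delta = \int[lam]_x (delta * f x).
  by rewrite RintegralZl // ?dens_R ?mulr1 //; exact: f_int.
apply: le_Rintegral => //; [exact: intZ f_int|exact: Ky_int|].
by move=> x _; exact: Kge.
Qed.

Lemma fK_int y : lam.-integrable setT (EFin \o (fun x => f x * K x y)).
Proof.
apply: eq_integrable (intZ (K y) (f y) (Ky_int y)) => // x _.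
by rewrite /comp K_rev.
Qed.

Lemma stat y : \int[lam]_x (f x * K x y) = f y * A y.
Proof.
transitivity (\int[lam]_x (f y * K y x)).
  by apply: eq_Rintegral => x _; rewrite K_rev.
by rewrite RintegralZl //; exact: Ky_int.
Qed.


Lemma step_bound (p : X -> R) (c : R) (y : X) : 0 <= c -> measurable_fun setT p ->
  (forall x, `|p x - f x| <= c * f x) -> \int[lam]_x p x = 1 ->
  `| (\int[lam]_x (p x * K x y) + p y * (1 - A y)) - f y| <= c * (1 - delta) * f y.
Proof.
move=> c0 mp pf p1.
have pb x : (1 - c) * f x <= p x <= (1 + c) * f x.
  by have := pf x; rewrite ler_norml => /andP[h1 h2]; apply/andP; split; lra.
have p_int : lam.-integrable setT (EFin \o p).
  apply: int_dom mp (intZ f (1 + c) f_int) _ => x.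
  have := pb x; have := f0 x; rewrite ler_norml => h /andP[h1 h2].
  apply/andP; split; nra.
pose G x := K x y - delta * f y.
have G0 x : 0 <= G x by rewrite /G subr_ge0 Kge.
have GK x : G x <= K x y.
  by rewrite /G lerBlDr lerDl mulr_ge0 ?f0 // ltW //; case/andP: hd.
have mG : measurable_fun setT G.
  by apply: measurable_funB; [exact: mKy|exact: measurable_cst].
have dom := intZ _ (1 + c) (intZ (K y) (f y) (Ky_int y)).
have fG_int : lam.-integrable setT (EFin \o (fun x => f x * G x)).
  apply: int_dom (intZ (K y) (f y) (Ky_int y)) _ => [|x].
    by apply: measurable_funM => //; exact: mf.
  rewrite -K_rev ger0_norm ?mulr_ge0 ?f0 //.
  by apply: ler_wpM2l; [exact: f0|exact: GK].
have pG_int : lam.-integrable setT (EFin \o (fun x => p x * G x)).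
  apply: int_dom dom _ => [|x]; first exact: measurable_funM.
  rewrite -K_rev normrM (ger0_norm (G0 x)).
  have hp : `|p x| <= (1 + c) * f x.
    have := pb x; have := f0 x; rewrite ler_norml => h /andP[h1 h2].
    apply/andP; split; nra.
  have := G0 x; have := GK x; have := f0 x; have := normr_ge0 (p x); nra.
have hT1 : \int[lam]_x (p x * K x y) = \int[lam]_x (p x * G x) + delta * f y.
  transitivity (\int[lam]_x (p x * G x + delta * f y * p x)).
    by apply: eq_Rintegral => x _; rewrite /G; ring.
  rewrite RintegralD //; last exact: intZ.
  by rewrite RintegralZl // p1 mulr1.
have hJ : \int[lam]_x (f x * G x) = f y * A y - delta * f y.
  transitivity (\int[lam]_x (f x * K x y - delta * f y * f x)).
    by apply: eq_Rintegral => x _; rewrite /G; ring.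
  rewrite RintegralB //; [|exact: fK_int|exact: intZ f_int].
  by rewrite stat RintegralZl ?dens_R ?mulr1 //; exact: f_int.
have hup : \int[lam]_x (p x * G x) <= (1 + c) * \int[lam]_x (f x * G x).
  rewrite -RintegralZl //; apply: le_Rintegral => //; first exact: intZ.
  move=> x _; have := pb x; have := G0 x; nra.
have hlo : (1 - c) * \int[lam]_x (f x * G x) <= \int[lam]_x (p x * G x).
  rewrite -RintegralZl //; apply: le_Rintegral => //; first exact: intZ.
  move=> x _; have := pb x; have := G0 x; nra.
rewrite hT1; move: hup hlo; rewrite hJ.
set I := \int[lam]_x (p x * G x).
have := A_le1 y; have := A_ge y; have := pb y; have := f0 y.
case/andP: hd => d0 d1.
move=> fy /andP[py1 py2] Ay1 Ay2 hup hlo.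
rewrite ler_norml; apply/andP; split; nra.
Qed.


Definition Top (p : X -> R) : X -> R := fun y =>
  \int[lam]_x (p x * mh_acc f q x y * q x y)
  + p y * (1 - \int[lam]_z (mh_acc f q y z * q y z)).

Lemma TopE p y : Top p y = \int[lam]_x (p x * K x y) + p y * (1 - A y).
Proof.
rewrite /Top /A /K; congr (_ + _).
by apply: eq_Rintegral => x _; rewrite mulrA.
Qed.

Lemma pK_int (p : X -> R) (c : R) y : 0 <= c -> measurable_fun setT p ->
  (forall x, `|p x - f x| <= c * f x) ->
  lam.-integrable setT (EFin \o (fun x => p x * K x y)).
Proof.
move=> c0 mp pf.
apply: int_dom (intZ _ (1 + c) (intZ (K y) (f y) (Ky_int y))) _ => [|x].
  by apply: measurable_funM => //; exact: mKy.
rewrite -K_rev normrM (ger0_norm (K0 x y)).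
have hp : `|p x| <= (1 + c) * f x.
  have := pf x; have := f0 x; rewrite !ler_norml => h /andP[h1 h2].
  apply/andP; split; nra.
have := K0 x y; have := f0 x; have := normr_ge0 (p x); nra.
Qed.

Lemma p_int (p : X -> R) (c : R) : 0 <= c -> measurable_fun setT p ->
  (forall x, `|p x - f x| <= c * f x) -> lam.-integrable setT (EFin \o p).
Proof.
move=> c0 mp pf.
apply: int_dom mp (intZ f (1 + c) f_int) _ => x.
have := pf x; have := f0 x; rewrite !ler_norml => h /andP[h1 h2].
apply/andP; split; nra.
Qed.

Lemma mA : measurable_fun setT A.
Proof.
have mF : measurable_fun [set: (X * X)%type] (fun z : X * X => (K z.1 z.2)%:E).
  exact: (proj2 (measurable_EFinP _ _) mK).
have := @mF_lam _ _ _ lam hs _ mF (fun z => K0 z.1 z.2).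
move/(measurableT_comp (fine_measurable measurableT)).
by rewrite /A /Rintegral.
Qed.

Lemma mT1 (p : X -> R) : measurable_fun setT p -> (forall x, 0 <= p x) ->
  measurable_fun setT (fun y => \int[lam]_x (p x * K x y)).
Proof.
move=> mp p0.
have mF : measurable_fun [set: (X * X)%type] (fun z : X * X => (p z.1 * K z.1 z.2)%:E).
  apply: (proj2 (measurable_EFinP _ (fun z : X * X => p z.1 * K z.1 z.2))).
  apply: measurable_funM; last exact: mK.
  exact: measurableT_comp mp measurable_fst.
have := @mG_lam _ _ _ lam hs _ mF (fun z => mulr_ge0 (p0 z.1) (K0 z.1 z.2)).
move/(measurableT_comp (fine_measurable measurableT)).
by rewrite /Rintegral.
Qed.

Lemma inner_eq (p : X -> R) x :
  (\int[lam]_y ((p x * K x y)%:E) = (p x * A x)%:E)%E.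
Proof.
under eq_integral => y _ do rewrite EFinM.
rewrite integralZl //; last exact: Ky_int.
rewrite EFinM /A /Rintegral fineK //.
exact: integrable_fin_num (Ky_int x).
Qed.

Lemma Top_props (p : X -> R) (c : R) : 0 <= c -> measurable_fun setT p ->
  (forall x, 0 <= p x) -> (forall x, `|p x - f x| <= c * f x) ->
  \int[lam]_x p x = 1 ->
  [/\ measurable_fun setT (Top p), (forall y, 0 <= Top p y),
      (forall y, `|Top p y - f y| <= c * (1 - delta) * f y)
    & \int[lam]_y Top p y = 1].
Proof.
move=> c0 mp p0 pf p1.
have TE : Top p = fun y => \int[lam]_x (p x * K x y) + p y * (1 - A y).
  by apply/funext => y; rewrite TopE.
rewrite TE; split.
- apply: measurable_funD; first exact: mT1.
  apply: measurable_funM => //; apply: measurable_funB; first exact: measurable_cst.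
  exact: mA.
- move=> y; apply: addr_ge0; first by apply: Rintegral_ge0 => x _; rewrite mulr_ge0 ?p0 ?K0.
  by rewrite mulr_ge0 ?p0 // subr_ge0 A_le1.
- by move=> y; exact: step_bound.
pose T1 y := \int[lam]_x (p x * K x y).
have pint := p_int p c c0 mp pf.
have A0 y : 0 <= A y by rewrite (le_trans _ (A_ge y)) // ltW //; case/andP: hd.
have pA_int : lam.-integrable setT (EFin \o (fun y => p y * A y)).
  apply: int_dom pint _ => [|y]; first by apply: measurable_funM => //; exact: mA.
  rewrite normrM !ger0_norm ?p0 // ler_piMr ?p0 //; exact: A_le1.
have pB_int : lam.-integrable setT (EFin \o (fun y => p y - p y * A y)).
  apply: int_dom pint _ => [|y].
    by apply: measurable_funB => //; apply: measurable_funM => //; exact: mA.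
  have := A_le1 y; have := A0 y; have := p0 y; move=> h1 h2 h3.
  rewrite ler_norml; apply/andP; split; nra.
have T1E y : ((T1 y)%:E = \int[lam]_x ((p x * K x y)%:E))%E.
  rewrite /T1 /Rintegral fineK //; exact: integrable_fin_num (pK_int p c y c0 mp pf).
have F0 : forall z : X * X, (0 <= (fun z : X * X => (p z.1 * K z.1 z.2)%:E) z)%E.
  by move=> z; rewrite lee_fin mulr_ge0 ?p0 ?K0.
have mF : measurable_fun [set: (X * X)%type] (fun z : X * X => (p z.1 * K z.1 z.2)%:E).
  apply: (proj2 (measurable_EFinP _ (fun z : X * X => p z.1 * K z.1 z.2))).
  apply: measurable_funM; last exact: mK.
  exact: measurableT_comp mp measurable_fst.
have hfub := @fubini_lam _ _ _ lam hs _ mF F0; simpl in hfub.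
have hT1int : (\int[lam]_y ((T1 y)%:E) = (\int[lam]_y (p y * A y))%:E)%E.
  transitivity (\int[lam]_y \int[lam]_x ((p x * K x y)%:E))%E.
    by apply: eq_integral => y _; rewrite T1E.
  rewrite -hfub.
  transitivity (\int[lam]_x ((p x * A x)%:E))%E.
    by apply: eq_integral => x _; rewrite inner_eq.
  rewrite /Rintegral fineK //; exact: integrable_fin_num pA_int.
have T1_int : lam.-integrable setT (EFin \o T1).
  apply: intP; first exact: mT1.
  have -> : (\int[lam]_y `|(T1 y)%:E| = \int[lam]_y ((T1 y)%:E))%E.
    apply: eq_integral => y _; rewrite gee0_abs // lee_fin.
    by apply: Rintegral_ge0 => x _; rewrite mulr_ge0 ?p0 ?K0.
  by rewrite hT1int ltry.
have hR : \int[lam]_y T1 y = \int[lam]_y (p y * A y).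
  by rewrite {1}/Rintegral hT1int.
transitivity (\int[lam]_y (T1 y + (p y - p y * A y))).
  by apply: eq_Rintegral => y _; rewrite /T1 mulrBr mulr1.
rewrite RintegralD // RintegralB // hR p1; ring.
Qed.

Lemma pow_bounds (p : X -> R) (c a : R) x : 0 <= c -> 1 < a -> (forall x, 0 <= p x) ->
  (forall x, `|p x - f x| <= c * f x) ->
  0 <= p x `^ a * f x `^ (1 - a) <= (1 + c) `^ a * f x /\
  (c <= 1 -> (1 - c) `^ a * f x <= p x `^ a * f x `^ (1 - a)).
Proof.
move=> c0 a1 p0 pf.
have pb : (1 - c) * f x <= p x <= (1 + c) * f x.
  by have := pf x; rewrite ler_norml => /andP[h1 h2]; apply/andP; split; lra.
have a0 : a != 0 by apply: lt0r_neq0; lra.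
have a10 : 1 - a != 0 by apply: ltr0_neq0; lra.
have [fx0|fxn0] := eqVneq (f x) 0.
  have px0 : p x = 0.
    by move: pb; rewrite fx0 !mulr0 => /andP[h1 h2]; apply/eqP; rewrite eq_le h2 p0.
  by rewrite fx0 px0 powR0 // !mulr0 mul0r lexx.
have fpos : 0 < f x by rewrite lt0r fxn0 f0.
have fE : f x = f x `^ a * f x `^ (1 - a).
  by rewrite -powRD ?fxn0 ?implybT // addrC subrK powRr1 // f0.
split.
- apply/andP; split; first by rewrite mulr_ge0 ?powR_ge0.
  rewrite [in X in _ <= _ * X]fE mulrA -powRM ?f0 //; last lra.
  apply: ler_wpM2r; first exact: powR_ge0.
  apply: ge0_ler_powR; rewrite ?nnegrE ?p0 ?mulr_ge0 ?f0 //; lra.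
- move=> c1; rewrite [in X in _ * X <= _]fE mulrA -powRM ?f0 //; last lra.
  apply: ler_wpM2r; first exact: powR_ge0.
  apply: ge0_ler_powR; rewrite ?nnegrE ?p0 ?mulr_ge0 ?f0 //; lra.
Qed.

Lemma M_bounds (p : X -> R) (c a : R) : 0 <= c -> 1 < a -> measurable_fun setT p ->
  (forall x, 0 <= p x) -> (forall x, `|p x - f x| <= c * f x) ->
  exists m, Malpha lam a p f = m%:E /\ 0 <= m <= (1 + c) `^ a /\
    (c <= 1 -> (1 - c) `^ a <= m).
Proof.
move=> c0 a1 mp p0 pf.
have mg : measurable_fun setT (fun x => p x `^ a * f x `^ (1 - a)).
  apply: measurable_funM.
    exact: measurableT_comp (measurable_powR a) mp.
  exact: measurableT_comp (measurable_powR (1 - a)) mf.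
have mg' : measurable_fun setT (EFin \o (fun x => p x `^ a * f x `^ (1 - a))).
  exact/measurable_EFinP.
have intf : (\int[lam]_x (f x)%:E = 1)%E by case: hf => _ [].
have hU : (Malpha lam a p f <= ((1 + c) `^ a)%:E)%E.
  rewrite /Malpha -[X in (_ <= X)%E]mule1 -intf -integralZl //; last exact: f_int.
  apply: ge0_le_integral => //.
  - by move=> x _; rewrite lee_fin; case: (pow_bounds p c a x c0 a1 p0 pf) => /andP[].
  - under eq_fun do rewrite -EFinM.
    exact/measurable_EFinP/measurable_funM/mf/measurable_cst.
  - by move=> x _; rewrite -EFinM lee_fin; case: (pow_bounds p c a x c0 a1 p0 pf) => /andP[].
have hM0 : (0 <= Malpha lam a p f)%E.
  apply: integral_ge0 => x _; rewrite lee_fin.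
  by case: (pow_bounds p c a x c0 a1 p0 pf) => /andP[].
have hfin : Malpha lam a p f \is a fin_num.
  by rewrite ge0_fin_numE // (le_lt_trans hU) // ltry.
exists (fine (Malpha lam a p f)); rewrite fineK //; split => //.
split.
  by rewrite -lee_fin fineK // hM0 /= -lee_fin fineK.
move=> c1; rewrite -lee_fin fineK //.
rewrite -[X in (X <= _)%E]mule1 -intf -integralZl //; last exact: f_int.
apply: ge0_le_integral => //.
- move=> x _; rewrite -EFinM lee_fin mulr_ge0 ?f0 ?powR_ge0 //.
- under eq_fun do rewrite -EFinM.
  exact/measurable_EFinP/measurable_funM/mf/measurable_cst.
- by move=> x _; rewrite -EFinM lee_fin; case: (pow_bounds p c a x c0 a1 p0 pf) => _ /(_ c1).
Qed.

Lemma base_bound (p0 : X -> R) (r : R) : sup_ratio_dev p0 f = r%:E ->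
  forall x, `|p0 x - f x| <= r * f x.
Proof.
move=> hr x.
have : (ratio_dev p0 f x <= r%:E)%E.
  by rewrite -hr; apply: le_ereal_sup_tmp; exists (ratio_dev p0 f x) => //; exists x.
rewrite /ratio_dev; have [fx0|fxn0] := eqVneq (f x) 0 => /=.
  case: eqP => [->|_]; first by rewrite fx0 subrr normr0 mulr0.
  by rewrite leye_eq.
rewrite lee_fin => h.
have fpos : 0 < f x by rewrite lt0r fxn0 f0.
rewrite (_ : p0 x - f x = (p0 x / f x - 1) * f x); last by field.
by rewrite normrM (ger0_norm (f0 x)) ler_wpM2r ?f0.
Qed.

Definition good (p : X -> R) (c : R) := measurable_fun setT p /\
  (forall x, 0 <= p x) /\ (forall x, `|p x - f x| <= c * f x) /\ \int[lam]_x p x = 1.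

Lemma good_n (p0 : X -> R) (r : R) : is_density lam p0 -> 0 <= r ->
  (forall x, `|p0 x - f x| <= r * f x) ->
  forall n, good (mh_density lam f q p0 n) (r * (1 - delta) ^+ n).
Proof.
move=> hp0 r0 pf; elim=> [|n [m [pp [b i]]]].
  case: hp0 => mp [pp ip]; split => //; split => //; split.
    by move=> x; rewrite expr0 mulr1.
  by rewrite /Rintegral ip.
have c0 : 0 <= r * (1 - delta) ^+ n.
  by rewrite mulr_ge0 // exprn_ge0 // subr_ge0 ltW //; case/andP: hd.
have [h1 h2 h3 h4] := Top_props _ _ c0 m pp b i.
rewrite (_ : mh_density lam f q p0 n.+1 = Top (mh_density lam f q p0 n)) //.
split => //; split => //; split => // x.
by rewrite exprS mulrCA -mulrA mulrCA mulrA; exact: h3.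
Qed.

Lemma main_sec (p0 : X -> R) (r : R) : is_density lam p0 ->
  sup_ratio_dev p0 f = r%:E -> 0 < r ->
  let nu := 1 - delta in
  let p := mh_density lam f q p0 in
  forall a : R, 1 < a ->
    (forall n : nat,
      (Dalpha lam a (p n) f
         <= (1 / (a * (1 - a)) * (1 - (r * nu ^+ n + 1) `^ a))%:E)%E /\
      (Ralpha lam a (p n) f <= (a / (a - 1) * (r * nu ^+ n))%:E)%E /\
      (Talpha lam a (p n) f
         <= (1 / (a - 1) * ((r * nu ^+ n + 1) `^ a - 1))%:E)%E) /\
    (fun n => Dalpha lam a (p n) f) @ \oo --> 0%E /\
    (fun n => Ralpha lam a (p n) f) @ \oo --> 0%E /\
    (fun n => Talpha lam a (p n) f) @ \oo --> 0%E.
Proof.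
move=> hp0 hr r0 nu p a a1.
have pf0 := base_bound p0 r hr.
have G := good_n p0 r hp0 (ltW r0) pf0.
have nu0 : 0 <= nu by rewrite /nu subr_ge0 ltW //; case/andP: hd.
pose c n := r * nu ^+ n.
have c0 n : 0 <= c n by rewrite /c mulr_ge0 ?exprn_ge0 // ltW.
have hM n : exists m, Malpha lam a (p n) f = m%:E /\ 0 <= m <= (1 + c n) `^ a /\
    (c n <= 1 -> (1 - c n) `^ a <= m).
  by case: (G n) => [mp [pp [pb _]]]; exact: M_bounds.
pose m n := fine (Malpha lam a (p n) f).
have hm n : Malpha lam a (p n) f = (m n)%:E /\ 0 <= m n <= (c n + 1) `^ a /\
    (c n <= 1 -> (1 - c n) `^ a <= m n).
  by have [m' [e h]] := hM n; rewrite /m e /= addrC.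
split.
  move=> n; have [e [h1 _]] := hm n; have [D Rr T] := @div_bounds _ (m n) (c n) a (c0 n) a1 h1.
  by rewrite /Dalpha /Ralpha /Talpha e.
have cc : c n @[n --> \oo] --> 0.
  rewrite /c -(mulr0 r); apply: cvgMl_tmp; apply: cvg_expr.
  rewrite ger0_norm // /nu; case/andP: hd => d0 d1; lra.
have mU n : m n <= (c n + 1) `^ a by have [_ [/andP[_ h] _]] := hm n.
have mL n : c n <= 1 -> (1 - c n) `^ a <= m n by have [_ [_ h]] := hm n.
have [L1 L2 L3] := @limits _ c m a a1 c0 cc mU mL.
split; last split.
- have -> : (fun n => Dalpha lam a (p n) f) =
    (fun n => ((1 - (m n)%:E) * (1 / (a * (1 - a)))%:E)%E).
    by apply/funext => n; rewrite /Dalpha (hm n).1.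
  exact: L1.
- have -> : (fun n => Ralpha lam a (p n) f) =
    (fun n => (lne (m n)%:E * (1 / (a - 1))%:E)%E).
    by apply/funext => n; rewrite /Ralpha (hm n).1.
  exact: L2.
- have -> : (fun n => Talpha lam a (p n) f) =
    (fun n => (((m n)%:E - 1) * (1 / (a - 1))%:E)%E).
    by apply/funext => n; rewrite /Talpha (hm n).1.
  exact: L3.
Qed.

End MH.

Theorem theorem1 (d : measure_display) (X : measurableType d) (R : realType)
  (lam : {measure set X -> \bar R}) (f : X -> R) (q : X -> X -> R)
  (p0 : X -> R) (delta r : R) :
  sigma_finite setT lam ->
  is_density lam f ->
  (forall x, is_density lam (q x)) ->
  measurable_fun setT (fun xy : X * X => q xy.1 xy.2) ->
  is_density lam p0 ->
  0 < delta < 1 ->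
  (forall x y, delta * f y <= q x y) ->
  sup_ratio_dev p0 f = r%:E -> 0 < r ->
  let nu := 1 - delta in
  let p := mh_density lam f q p0 in
  forall a : R, 1 < a ->
    (forall n : nat,
      (Dalpha lam a (p n) f
         <= (1 / (a * (1 - a)) * (1 - (r * nu ^+ n + 1) `^ a))%:E)%E /\
      (Ralpha lam a (p n) f <= (a / (a - 1) * (r * nu ^+ n))%:E)%E /\
      (Talpha lam a (p n) f
         <= (1 / (a - 1) * ((r * nu ^+ n + 1) `^ a - 1))%:E)%E) /\
    (fun n => Dalpha lam a (p n) f) @ \oo --> 0%E /\
    (fun n => Ralpha lam a (p n) f) @ \oo --> 0%E /\
    (fun n => Talpha lam a (p n) f) @ \oo --> 0%E.
Proof.
move=> hs hf hq mq hp0 hd hqd hr r0.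
by apply: main_sec.
Qed.
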